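(* Let $k\geq 2$ and let $G=G_1\square G_2 \square \cdots \square G_k$ be a Cartesian prime factorization of $G$ into mutually non-isomorphic connected graphs. For $i=1,\ldots,k$ let $Q_i=G_1\square\cdots\square G_{i-1}\square G_{i+1}\square\cdots\square G_k$, so $|Q_i|=|G|/|G_i|$. Then $$\theta (G)=\max \left\{ \left(\theta(G_i)-1\right)\cdot |Q_i|\; : \; i=1,\dots,k \right\}+1.$$
   Context: Graphs are finite and simple; $|H|$ denotes the number of vertices of $H$. A vertex coloring of a graph is distinguishing if the identity is the only automorphism preserving it (mapping every vertex to a vertex of the same color). The distinguishing threshold $\theta(H)$ of a graph $H$ is the minimum number $t$ such that for every $k\geq t$, every vertex coloring of $H$ using $k$ colors is distinguishing. The Cartesian product $G\square H$ has vertex set $V(G)\times V(H)$, with $(g,h)\sim(g',h')$ iff either $g=g'$ and $hh'\in E(H)$, or $gg'\in E(G)$ and $h=h'$; a graph is prime (with respect to the Cartesian product) if it is not isomorphic to a Cartesian product of two graphs both non-isomorphic to it. *)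

(* Defs.v *)
From Stdlib Require Import ClassicalEpsilon.
From mathcomp Require Import all_boot all_fingroup.
Set Implicit Arguments. Unset Strict Implicit. Unset Printing Implicit Defensive.

Record sgraph := SGraph {
  vert : finType;
  adj : rel vert;
  adj_sym : symmetric adj;
  adj_irrefl : irreflexive adj }.

Definition giso (G H : sgraph) : Prop :=
  exists f : vert G -> vert H, bijective f /\ forall x y, adj (f x) (f y) = adj x y.

Definition connected (G : sgraph) : Prop :=
  (0 < #|vert G|) /\ forall x y : vert G, connect (@adj G) x y.

Definition cart2_adj (G H : sgraph) : rel (vert G * vert H) :=
  fun u v => ((u.1 == v.1) && adj u.2 v.2) || (adj u.1 v.1 && (u.2 == v.2)).

Lemma cart2_sym G H : symmetric (@cart2_adj G H).
Proof.
move=> [a b] [c d]; rewrite /cart2_adj /= (eq_sym a c) (eq_sym b d).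
by rewrite (@adj_sym G a c) (@adj_sym H b d).
Qed.

Lemma cart2_irrefl G H : irreflexive (@cart2_adj G H).
Proof. by move=> [a b]; rewrite /cart2_adj /= !adj_irrefl !andbF andFb. Qed.

Definition cart2 (G H : sgraph) : sgraph :=
  @SGraph (vert G * vert H)%type (@cart2_adj G H) (@cart2_sym G H) (@cart2_irrefl G H).

Definition cartn_adj (I : finType) (G : I -> sgraph) :
    rel {dffun forall i : I, vert (G i)} :=
  fun x y => [exists j, adj (x j) (y j) && [forall i, (i != j) ==> (x i == y i)]].

Lemma cartn_sym (I : finType) (G : I -> sgraph) : symmetric (@cartn_adj I G).
Proof.
move=> x y; rewrite /cartn_adj; apply/existsP/existsP => -[j /andP[h1 /forallP h2]];
exists j; rewrite adj_sym h1 /=; apply/forallP => i; apply/implyP => hi; rewrite eq_sym; exact: (implyP (h2 i) hi).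
Qed.

Lemma cartn_irrefl (I : finType) (G : I -> sgraph) : irreflexive (@cartn_adj I G).
Proof.
move=> x; rewrite /cartn_adj; apply/existsP => -[j /andP[h _]].
by rewrite adj_irrefl in h.
Qed.

Definition cartn (I : finType) (G : I -> sgraph) : sgraph :=
  @SGraph {dffun forall i : I, vert (G i)} (@cartn_adj I G)
          (@cartn_sym I G) (@cartn_irrefl I G).

Definition Qdel (k : nat) (G : 'I_k -> sgraph) (i : 'I_k) : sgraph :=
  cartn (fun j : {j : 'I_k | j != i} => G (sval j)).

Definition cprime (G : sgraph) : Prop :=
  ~ exists H K : sgraph, giso G (cart2 H K) /\ ~ giso H G /\ ~ giso K G.

Definition is_aut (G : sgraph) (s : {perm vert G}) : Prop :=
  forall x y, adj (s x) (s y) = adj x y.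

Definition distinguishing (G : sgraph) (c : vert G -> nat) : Prop :=
  forall s : {perm vert G}, is_aut s -> (forall v, c (s v) = c v) -> s = 1%g.

Definition uses_colors (G : sgraph) (c : vert G -> nat) (k : nat) : Prop :=
  size (undup (codom c)) = k.

Definition threshold_ok (G : sgraph) (t : nat) : Prop :=
  0 < t /\ forall k, t <= k ->
    forall c : vert G -> nat, uses_colors c k -> distinguishing c.

Definition threshold_okb (G : sgraph) : pred nat :=
  fun t => if excluded_middle_informative (threshold_ok G t) then true else false.

Lemma threshold_exists (G : sgraph) : exists t, threshold_okb G t.
Proof.
exists #|vert G|.+1; rewrite /threshold_okb.
case: excluded_middle_informative => // -[]; split => // k hk c hc.
have := size_undup (codom c); rewrite size_codom.
move: hc; rewrite /uses_colors => -> h.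
by have := leq_trans hk h; rewrite ltnn.
Qed.

Definition theta (G : sgraph) : nat := ex_minn (threshold_exists G).

(* Main.v *)
Require Import Defs.
From mathcomp Require Import all_boot all_fingroup zify.
From Stdlib Require Import ClassicalEpsilon Classical.
Set Implicit Arguments. Unset Strict Implicit. Unset Printing Implicit Defensive.

Section Ball.
Variable H : sgraph.
Implicit Types x y z : vert H.

Fixpoint ball n x : {set vert H} :=
  if n is n'.+1 then ball n' x :|: [set y | [exists z in ball n' x, adj z y]]
  else [set x].

Lemma ballS n x y : (y \in ball n.+1 x) = (y \in ball n x) || [exists z in ball n x, adj z y].
Proof. by rewrite /= !inE. Qed.

Lemma ball0 x y : (y \in ball 0 x) = (y == x).
Proof. by rewrite /= inE. Qed.

Lemma ball_mono n m x : n <= m -> ball n x \subset ball m x.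
Proof.
elim: m => [|m IH]; first by rewrite leqn0 => /eqP ->.
rewrite leq_eqVlt => /orP[/eqP->|/IH h]; first exact: subxx.
by apply/subsetP => y /(subsetP h) hy; rewrite ballS hy.
Qed.

Lemma ball_trans n m x y z : y \in ball n x -> z \in ball m y -> z \in ball (n + m) x.
Proof.
move=> hy; elim: m z => [|m IH] z; first by rewrite ball0 addn0 => /eqP ->.
rewrite ballS addnS => /orP[/IH h|/existsP[w /andP[hw hwz]]].
  by rewrite ballS h.
by rewrite ballS; apply/orP; right; apply/existsP; exists w; rewrite IH.
Qed.

Lemma ball_adj x y : adj x y -> y \in ball 1 x.
Proof. by move=> h; rewrite ballS; apply/orP; right; apply/existsP; exists x; rewrite ball0 eqxx. Qed.

Lemma ball_sym n x y : y \in ball n x -> x \in ball n y.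
Proof.
elim: n y => [|n IH] y; first by rewrite !ball0 eq_sym.
rewrite ballS => /orP[/IH h|/existsP[z /andP[hz hzy]]].
  exact: (subsetP (ball_mono y (leqnSn n))).
have h1 : z \in ball 1 y by apply: ball_adj; rewrite adj_sym.
by have := ball_trans h1 (IH _ hz); rewrite add1n.
Qed.

Lemma ball_path x p : path (@adj H) x p -> last x p \in ball (size p) x.
Proof.
elim: p x => [|z p IH] x /=; first by rewrite ball0.
move=> /andP[hxz hp]; have := ball_trans (ball_adj hxz) (IH _ hp).
by rewrite add1n.
Qed.

Definition inball x y : pred nat := fun n => y \in ball n x.

Definition dist x y : nat :=
  match excluded_middle_informative (exists n, inball x y n) with
  | left h => ex_minn h | right _ => 0 end.

Lemma distP n x y : y \in ball n x -> forall m, (dist x y <= m) = (y \in ball m x).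
Proof.
move=> hn m; rewrite /dist; case: excluded_middle_informative => [h|[]]; last by exists n.
case: ex_minnP => d hd hmin; apply/idP/idP => [le|hm]; last exact: hmin.
exact: (subsetP (ball_mono x le)).
Qed.

Definition aut_perm (s : {perm vert H}) := is_aut s.

Lemma aut_inv (s : {perm vert H}) : is_aut s -> is_aut s^-1.
Proof. by move=> hs x y; rewrite -hs !permKV. Qed.

Lemma ball_aut (s : {perm vert H}) n x y : is_aut s -> y \in ball n x -> s y \in ball n (s x).
Proof.
move=> hs; elim: n y => [|n IH] y; first by rewrite !ball0 => /eqP ->.
rewrite !ballS => /orP[/IH ->//|/existsP[z /andP[hz hzy]]].
by apply/orP; right; apply/existsP; exists (s z); rewrite IH // hs.
Qed.

End Ball.

Section Dist.
Variable H : sgraph.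
Variable hc : forall x y : vert H, exists n, y \in ball n x.
Implicit Types x y z : vert H.

Lemma dist_le x y m : (dist x y <= m) = (y \in ball m x).
Proof. by have [n hn] := hc x y; exact: distP hn m. Qed.

Lemma dist_ball x y : y \in ball (dist x y) x.
Proof. by rewrite -dist_le. Qed.

Lemma dist0 x y : (dist x y == 0) = (y == x).
Proof. by rewrite -leqn0 dist_le ball0. Qed.

Lemma dist_xx x : dist x x = 0.
Proof. by apply/eqP; rewrite dist0. Qed.

Lemma dist_sym x y : dist x y = dist y x.
Proof.
by apply/eqP; rewrite eqn_leq !dist_le; apply/andP; split; apply: ball_sym; apply: dist_ball.
Qed.

Lemma dist_tri x y z : dist x z <= dist x y + dist y z.
Proof. by rewrite dist_le; apply: ball_trans; apply: dist_ball. Qed.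

Lemma dist_adj x y : adj x y -> dist x y <= 1.
Proof. by move=> h; rewrite dist_le ball_adj. Qed.

Lemma dist_step x y m : dist x y = m.+1 -> exists2 z, adj z y & dist x z = m.
Proof.
move=> hd; have : y \in ball m.+1 x by rewrite -dist_le hd.
rewrite ballS; case/orP => [|/existsP[z /andP[hz hzy]]].
  by rewrite -dist_le hd ltnn.
exists z => //; apply/eqP; rewrite eqn_leq dist_le hz /=.
have := dist_tri x z y; rewrite hd => h.
by have := leq_trans h (leq_add (leqnn _) (dist_adj hzy)); rewrite addn1 ltnS.
Qed.

Lemma dist_aut (s : {perm vert H}) x y : is_aut s -> dist (s x) (s y) = dist x y.
Proof.
move=> hs; apply/eqP; rewrite eqn_leq !dist_le; apply/andP; split.
  by apply: ball_aut => //; apply: dist_ball.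
by have := ball_aut (aut_inv hs) (dist_ball (s x) (s y)); rewrite !permK.
Qed.

End Dist.

Lemma sum_eq_le (I : finType) (a b : I -> nat) :
  (forall j, a j <= b j) -> \sum_j b j <= \sum_j a j -> forall j, a j = b j.
Proof.
move=> hab hs j; apply/eqP; rewrite eqn_leq hab /= leqNgt; apply/negP => hlt.
move: hs; rewrite (bigD1 j) //= [X in _ <= X](bigD1 j) //=.
have hs2 : \sum_(l | l != j) a l <= \sum_(l | l != j) b l by apply: leq_sum => l _; apply: hab.
lia.
Qed.

Section Prod.
Variables (I : finType) (Gs : I -> sgraph).
Notation P := (cartn Gs).
Notation PV := (vert P).

Definition upd (x : PV) (i : I) (g : vert (Gs i)) : PV :=
  [ffun j => dfwith (fun l => x l) g j].

Lemma upd_in (x : PV) i (g : vert (Gs i)) : upd x g i = g.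
Proof. by rewrite ffunE dfwith_in. Qed.

Lemma upd_out (x : PV) i (g : vert (Gs i)) j : i != j -> upd x g j = x j.
Proof. by move=> h; rewrite ffunE dfwith_out. Qed.

Lemma upd_id (x : PV) i : @upd x i (x i) = x.
Proof. by apply/ffunP => j; case: (eqVneq i j) => [<-|h]; rewrite ?upd_in ?upd_out. Qed.

Lemma upd_upd (x : PV) i (g g' : vert (Gs i)) : upd (upd x g) g' = upd x g' :> PV.
Proof.
apply/ffunP => j; case: (eqVneq i j) => [<-|h]; rewrite ?upd_in ?upd_out //.
Qed.

Lemma upd_inj (x : PV) i : injective (@upd x i).
Proof. by move=> g g' h; rewrite -(upd_in x g) h upd_in. Qed.

Lemma cartn_adjP (x y : PV) :
  reflect (exists j, adj (x j) (y j) /\ forall l, l != j -> x l = y l) (cartn_adj x y).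
Proof.
apply: (iffP existsP) => [[j /andP[h1 /forallP h2]]|[j [h1 h2]]].
  by exists j; split => // l hl; apply/eqP; exact: (implyP (h2 l) hl).
exists j; rewrite h1 /=; apply/forallP => l; apply/implyP => hl; apply/eqP; exact: h2.
Qed.

Lemma adj_upd (x : PV) i (g g' : vert (Gs i)) : cartn_adj (upd x g) (upd x g') = adj g g'.
Proof.
apply/cartn_adjP/idP => [[j [h1 h2]]|h].
  case: (eqVneq i j) => [ij|ij]; first by subst j; rewrite !upd_in in h1.
  by move: h1; rewrite !upd_out // adj_irrefl.
exists i; rewrite !upd_in; split => // l hl; rewrite !upd_out // eq_sym //.
Qed.

Lemma adj_upd_cartn (x : PV) i (g : vert (Gs i)) : adj g (x i) -> @adj P (upd x g) x.
Proof.
move=> h; apply/cartn_adjP; exists i; rewrite upd_in; split => // l hl.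
by rewrite upd_out // eq_sym.
Qed.

Variable hc : forall i (x y : vert (Gs i)), exists n, y \in ball n x.

Definition D (x y : PV) := \sum_j dist (x j) (y j).

Lemma ballP n (x y : PV) : (y \in ball n x) = (D x y <= n).
Proof.
elim: n y => [|n IH] y.
  rewrite ball0 leqn0 sum_nat_eq0; apply/eqP/forallP => [->|h] /=.
    by move=> j; rewrite dist_xx.
  by apply/ffunP => j; have := h j; rewrite dist0 //; move/eqP.
rewrite ballS IH; apply/idP/idP => [/orP[h|/existsP[z /andP[hz /cartn_adjP[j [h1 h2]]]]]|h].
- exact: leq_trans h (leqnSn _).
- rewrite IH -ltnS in hz; apply: leq_trans _ hz; rewrite /D (bigD1 j) //= [X in _ <= X.+1](bigD1 j) //=.
  have -> : \sum_(l | l != j) dist (x l) (y l) = \sum_(l | l != j) dist (x l) (z l).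
    by apply: eq_bigr => l hl; rewrite h2.
  have := dist_tri (hc (i:=j)) (x j) (z j) (y j); have := dist_adj (hc (i:=j)) h1; lia.
- case: (leqP (D x y) n) => [//|hlt].
  have hD : D x y = n.+1 by apply/eqP; rewrite eqn_leq h hlt.
  have [j hj] : exists j, 0 < dist (x j) (y j).
    apply/existsP; move: hD; apply: contra_eqT; rewrite negb_exists => /forallP hf.
    suff -> : D x y = 0 by [].
    by apply/eqP; rewrite sum_nat_eq0; apply/forallP => j; have := hf j; rewrite lt0n negbK.
  move: hj; case hm : (dist (x j) (y j)) => [//|m] _.
  have [w hw hxw] := dist_step (hc (i:=j)) hm.
  apply/orP; right; apply/existsP; exists (upd y w).
  rewrite (adj_upd_cartn hw) andbT IH; move: hD.
  have e1 : D x y = dist (x j) (y j) + \sum_(l | l != j) dist (x l) (y l) by rewrite /D (bigD1 j).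
  have e2 : D x (upd y w) = dist (x j) (upd y w j) + \sum_(l | l != j) dist (x l) (upd y w l) by rewrite /D (bigD1 j).
  rewrite e1 e2 upd_in hxw hm.
  have -> : \sum_(l | l != j) dist (x l) (upd y w l) = \sum_(l | l != j) dist (x l) (y l).
    by apply: eq_bigr => l hl; rewrite upd_out // eq_sym.
  lia.
Qed.

Lemma hcP (x y : PV) : exists n, y \in ball n x.
Proof. by exists (D x y); rewrite ballP. Qed.

Lemma distPE (x y : PV) : dist x y = D x y.
Proof.
apply/eqP; rewrite eqn_leq (dist_le hcP) ballP leqnn /=.
by rewrite -ballP -(dist_le hcP).
Qed.

Lemma layer_convex i (u v w : PV) : (forall l, l != i -> u l = v l) ->
  dist u w + dist w v = dist u v -> forall l, l != i -> w l = u l.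
Proof.
move=> huv hd l hl; rewrite !distPE /D -big_split /= in hd.
have htri : forall j, dist (u j) (v j) <= dist (u j) (w j) + dist (w j) (v j).
  by move=> j; apply: dist_tri.
have := sum_eq_le htri; rewrite hd leqnn => /(_ isT l) e.
have h0 : dist (u l) (v l) = 0 by rewrite huv // dist_xx.
have : dist (u l) (w l) == 0 by apply/eqP; lia.
by rewrite dist0 // => /eqP.
Qed.

Lemma mix_geo (s t z : PV) : (forall l, z l = s l \/ z l = t l) ->
  dist s z + dist z t = dist s t.
Proof.
move=> hz; rewrite !distPE /D -big_split /=; apply: eq_bigr => l _.
case: (hz l) => ->; rewrite dist_xx ?addn0 //.
Qed.

End Prod.

Section Ind.
Variables (H : sgraph) (X : {set vert H}).
Definition ind_adj : rel {y : vert H | y \in X} := fun a b => adj (val a) (val b).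
Lemma ind_sym : symmetric ind_adj.
Proof. by move=> a b; rewrite /ind_adj adj_sym. Qed.
Lemma ind_irr : irreflexive ind_adj.
Proof. by move=> a; rewrite /ind_adj adj_irrefl. Qed.
Definition ind : sgraph := @SGraph _ ind_adj ind_sym ind_irr.
Lemma card_ind : #|vert ind| = #|X|.
Proof. by rewrite /= card_sig; apply: eq_card => y; rewrite !inE. Qed.
End Ind.

Lemma giso_card (G H : sgraph) : giso G H -> #|vert G| = #|vert H|.
Proof. by case=> f [bf _]; exact: bij_eq_card bf. Qed.

Section Split.
Variables (I : finType) (Gs : I -> sgraph).
Notation P := (cartn Gs).
Notation PV := (vert P).

Lemma upd_eqE (y y' : PV) j (g : vert (Gs j)) :
  (upd y g == upd y' g) = [forall l, (l != j) ==> (y l == y' l)].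
Proof.
apply/eqP/forallP => [h l|h]; first by apply/implyP => hl; rewrite -(upd_out y g (i:=j)) 1?eq_sym // h upd_out 1?eq_sym.
apply/ffunP => l; case: (eqVneq j l) => [<-|hl]; rewrite ?upd_in ?upd_out //.
by apply/eqP; apply: (implyP (h l)); rewrite eq_sym.
Qed.

Lemma adj_split (e y y' : PV) j :
  cartn_adj y y' =
  ((upd e (y j) == upd e (y' j)) && cartn_adj (upd y (e j)) (upd y' (e j))) ||
  (cartn_adj (upd e (y j)) (upd e (y' j)) && (upd y (e j) == upd y' (e j))).
Proof.
rewrite adj_upd (inj_eq (@upd_inj _ _ e j)) upd_eqE.
apply/cartn_adjP/orP => [[l [h1 h2]]|].
  case: (eqVneq l j) => [elj|nlj].
    subst l; right; rewrite h1; apply/forallP => l; apply/implyP => hl; apply/eqP; exact: h2.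
  have hjl : j != l by rewrite eq_sym.
  left; rewrite (h2 j hjl) eqxx /=; apply/cartn_adjP; exists l.
  rewrite !upd_out 1?eq_sym //; split => // m hm.
  by case: (eqVneq j m) => [<-|hjm]; rewrite ?upd_in ?upd_out // h2 // eq_sym.
case=> [/andP[/eqP hj /cartn_adjP[l [h1 h2]]]|/andP[ha /forallP hb]].
  have nlj : l != j by apply: contraTneq h1 => ->; rewrite !upd_in adj_irrefl.
  exists l; move: h1; rewrite !upd_out 1?eq_sym // => h1; split => // m hm.
  case: (eqVneq m j) => [->//|hmj]; have := h2 m hm; rewrite !upd_out // eq_sym //.
exists j; split => // m hm; apply/eqP; exact: (implyP (hb m) hm).
Qed.

End Split.

Section Struct.
Variables (I : finType) (Gs : I -> sgraph).
Variable hc : forall i (x y : vert (Gs i)), exists n, y \in ball n x.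
Variable hprime : forall i, cprime (Gs i).
Notation P := (cartn Gs).
Notation PV := (vert P).

Section OnePerm.
Variable phi : {perm PV}.
Variable hphi : is_aut phi.

Definition S x i := [set phi (@upd _ Gs x i g) | g : vert (Gs i)].

Lemma mixS x i (a b z : PV) : a \in S x i -> b \in S x i ->
  (forall l, z l = a l \/ z l = b l) -> z \in S x i.
Proof.
move=> /imsetP[g _ ->] /imsetP[g' _ ->] hz.
set w := (phi^-1)%g z.
have hd : dist (upd x g) w + dist w (upd x g') = dist (upd x g) (upd x g').
  rewrite -(dist_aut (hcP hc) _ _ hphi) -[dist w _](dist_aut (hcP hc) _ _ hphi).
  rewrite -[dist (upd x g) _](dist_aut (hcP hc) _ _ hphi) /w permKV.
  exact: mix_geo.
have huv : forall l, l != i -> upd x g l = upd x g' l by move=> l hl; rewrite !upd_out // eq_sym.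
have hw := layer_convex hc huv hd.
apply/imsetP; exists (w i) => //.
have -> : upd x (w i) = w.
  apply/ffunP => l; case: (eqVneq i l) => [<-|hl]; rewrite ?upd_in ?upd_out //.
  by rewrite hw 1?eq_sym // upd_out.
by rewrite /w permKV.
Qed.

Lemma phi_adj (u v : PV) : cartn_adj (phi u) (phi v) = cartn_adj u v.
Proof. exact: hphi. Qed.

Lemma no_two x i j1 j2 (a b a' b' : PV) : j1 != j2 ->
  a \in S x i -> b \in S x i -> a' \in S x i -> b' \in S x i ->
  a j1 != b j1 -> a' j2 != b' j2 -> False.
Proof.
move=> hj ha hb ha' hb' hab hab'.
set e := phi x.
have he : e \in S x i by apply/imsetP; exists (x i); rewrite ?upd_id.
set A := [set y in S x i | [forall l, (l != j1) ==> (y l == e l)]].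
set B := [set y in S x i | y j1 == e j1].
have hp1 : forall y, y \in S x i -> upd e (y j1) \in A.
  move=> y hy; rewrite inE; apply/andP; split.
    apply: (mixS hy he) => l; case: (eqVneq j1 l) => [<-|h]; rewrite ?upd_in ?upd_out //; by [left|right].
  by apply/forallP => l; apply/implyP => hl; rewrite upd_out // eq_sym.
have hp2 : forall y, y \in S x i -> upd y (e j1) \in B.
  move=> y hy; rewrite inE upd_in eqxx andbT.
  by apply: (mixS hy he) => l; case: (eqVneq j1 l) => [<-|h]; rewrite ?upd_in ?upd_out //; by [left|right].
have heA : e \in A by have := hp1 e he; rewrite upd_id.
have heB : e \in B by have := hp2 e he; rewrite upd_id.
pose a0 : {y | y \in A} := exist _ e heA.
pose b0 : {y | y \in B} := exist _ e heB.
have hS : forall g : vert (Gs i), phi (upd x g) \in S x i by move=> g; apply/imsetP; exists g.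
pose F (g : vert (Gs i)) : vert (cart2 (ind A) (ind B)) :=
  (insubd a0 (upd e (phi (upd x g) j1)), insubd b0 (upd (phi (upd x g)) (e j1))).
pose Finv (p : vert (cart2 (ind A) (ind B))) : vert (Gs i) :=
  ((phi^-1)%g (upd (val p.2) (val p.1 j1))) i.
have hF1 : forall g, val (F g).1 = upd e (phi (upd x g) j1) by move=> g; rewrite /= insubdK // hp1.
have hF2 : forall g, val (F g).2 = upd (phi (upd x g)) (e j1) by move=> g; rewrite /= insubdK // hp2.
have bF : bijective F.
  exists Finv => [g|[a1 b1]].
    rewrite /Finv hF1 hF2 upd_in upd_upd upd_id permK upd_in //.
  have hz : upd (val b1) (val a1 j1) \in S x i.
    have hA : val a1 \in S x i by have := valP a1; rewrite inE => /andP[].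
    have hB : val b1 \in S x i by have := valP b1; rewrite inE => /andP[].
    apply: (mixS hA hB) => l.
    case: (eqVneq j1 l) => [<-|h]; rewrite ?upd_in ?upd_out //; by [left|right].
  case/imsetP: hz => g _ hg.
  have -> : Finv (a1, b1) = g by rewrite /Finv /= hg permK upd_in.
  have ea : upd e (phi (upd x g) j1) = val a1.
    rewrite -hg upd_in; apply/ffunP => l; case: (eqVneq j1 l) => [<-|h]; rewrite ?upd_in ?upd_out //.
    have := valP a1; rewrite inE => /andP[_ /forallP /(_ l)]; rewrite eq_sym h /= => /eqP -> //.
  have eb : upd (phi (upd x g)) (e j1) = val b1.
    rewrite -hg upd_upd -{2}(upd_id (val b1) j1); congr upd.
    by have := valP b1; rewrite inE => /andP[_ /eqP].
  by congr (_, _); apply: val_inj; rewrite ?hF1 ?hF2.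
have adjF : forall g g', adj (F g) (F g') = adj g g'.
  move=> g g'; rewrite -(adj_upd x g g') -phi_adj (adj_split e _ _ j1) /=.
  rewrite /cart2_adj /= /ind_adj -!(inj_eq val_inj) !hF1 !hF2 //.
have card_i : #|vert (Gs i)| = #|A| * #|B|.
  rewrite (bij_eq_card bF) /= card_prod; have := card_ind A; have := card_ind B; rewrite /= => -> ->; done.
have cA : 1 < #|A|.
  apply/card_gt1P; exists (upd e (a j1)), (upd e (b j1)); split; rewrite ?hp1 //.
  by rewrite (inj_eq (@upd_inj _ _ e j1)).
have cB : 1 < #|B|.
  apply/card_gt1P; exists (upd a' (e j1)), (upd b' (e j1)); split; rewrite ?hp2 //.
  apply: contra hab' => /eqP h; have := congr1 (fun f : PV => f j2) h.
  by rewrite /= !upd_out // => ->.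
have hpi : cprime (Gs i) := @hprime i; rewrite /cprime in hpi; apply: hpi; exists (ind A), (ind B); split; first by exists F.
split => /giso_card; rewrite card_ind card_i; nia.
Qed.

Lemma layer_in_layer x i : exists j, forall (g : vert (Gs i)) l, l != j -> phi (upd x g) l = phi x l.
Proof.
have hx : phi x \in S x i by apply/imsetP; exists (x i); rewrite ?upd_id.
case: (boolP [exists j1, exists g : vert (Gs i), phi (upd x g) j1 != phi x j1]) => [/existsP[j1 /existsP[g0 hg0]]| hn].
  exists j1 => g l hl; apply/eqP; apply: contraT => hne; exfalso.
  have hS : forall g : vert (Gs i), phi (upd x g) \in S x i by move=> g'; apply/imsetP; exists g'.
  have hjl : j1 != l by rewrite eq_sym.
  exact: (no_two hjl (hS g0) hx (hS g) hx hg0 hne).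
exists i => g l _; apply/eqP; move: hn; rewrite negb_exists => /forallP /(_ l).
by rewrite negb_exists => /forallP /(_ g); rewrite negbK.
Qed.

End OnePerm.

Variable hniso : forall i j, i != j -> ~ giso (Gs i) (Gs j).

Section OnePerm2.
Variable phi : {perm PV}.
Variable hphi : is_aut phi.

Lemma layer_same x i (g : vert (Gs i)) l : l != i -> phi (upd x g) l = phi x l.
Proof.
case: (eqVneq g (x i)) => [->|hg]; first by rewrite upd_id.
have [j hj] := layer_in_layer hphi x i.
have [j' hj'] := layer_in_layer (aut_inv hphi) (phi x) j.
have e1 : forall g : vert (Gs i), upd (phi x) (phi (upd x g) j) = phi (upd x g).
  move=> g'; apply/ffunP => m; case: (eqVneq j m) => [<-|hm]; rewrite ?upd_in ?upd_out //.
  by rewrite hj // eq_sym.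
have hij : i = j'.
  apply/eqP; apply: contraT => hne.
  have := hj' (phi (upd x g) j) i hne; rewrite e1 !permK upd_in => hg'.
  by rewrite hg' eqxx in hg.
subst j'.
have e2 : forall h : vert (Gs j), (phi^-1)%g (upd (phi x) h) = upd x (((phi^-1)%g (upd (phi x) h)) i).
  move=> h; apply/ffunP => m; case: (eqVneq i m) => [<-|hm]; rewrite ?upd_in ?upd_out //.
  by rewrite hj' 1?eq_sym // permK.
case: (eqVneq i j) => [eij|hne]; first by subst j; move=> hl; apply: hj.
exfalso; apply: (hniso hne).
exists (fun g : vert (Gs i) => phi (upd x g) j); split.
  exists (fun h : vert (Gs j) => ((phi^-1)%g (upd (phi x) h)) i) => [g'|h].
    by rewrite e1 permK upd_in.
  by rewrite -e2 permKV upd_in.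
move=> g1 g2; rewrite -(adj_upd (phi x)) !e1; have := hphi (upd x g1) (upd x g2).
by rewrite /= => ->; rewrite adj_upd.
Qed.

Lemma coordwise n (x y : PV) i : #|[set l | x l != y l]| <= n -> x i = y i -> phi x i = phi y i.
Proof.
elim: n x => [|n IH] x hn hxy.
  have -> : x = y; last by [].
  apply/ffunP => l; apply/eqP; apply: contraT => hl.
  have : l \in [set l | x l != y l] by rewrite inE.
  by move: hn; rewrite leqn0 cards_eq0 => /eqP ->; rewrite inE.
case: (eqVneq [set l | x l != y l] set0) => [h0|/set0Pn[l hl]].
  by apply: IH => //; rewrite h0 cards0.
have hli : l != i by apply: contraTneq hl => ->; rewrite inE hxy eqxx.
rewrite -(IH (upd x (y l))); last by rewrite upd_out // eq_sym.
  by rewrite layer_same // eq_sym.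
have sub : [set m | upd x (y l) m != y m] \subset [set l | x l != y l] :\ l.
  apply/subsetP => m; rewrite !inE; case: (eqVneq l m) => [<-|hm]; rewrite ?upd_in ?upd_out ?eqxx //.
apply: leq_trans (subset_leq_card sub) _; move: hn; rewrite (cardsD1 l) hl /=.
by rewrite add1n ltnS.
Qed.

End OnePerm2.
End Struct.

Definition ncol (T : finType) (c : T -> nat) := size (undup (codom c)).

Lemma ncol_eq (T T' : finType) (c : T -> nat) (c' : T' -> nat) :
  codom c =i codom c' -> ncol c = ncol c'.
Proof.
move=> h; apply: perm_size; apply: uniq_perm; rewrite ?undup_uniq // => n.
by rewrite !mem_undup h.
Qed.

Lemma theta_ok (G : sgraph) : threshold_ok G (theta G).
Proof.
rewrite /theta; case: ex_minnP => m hm _; move: hm; rewrite /threshold_okb.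
by case: excluded_middle_informative.
Qed.

Lemma theta_min (G : sgraph) t : threshold_ok G t -> theta G <= t.
Proof.
move=> h; rewrite /theta; case: ex_minnP => m _ hmin; apply: hmin.
by rewrite /threshold_okb; case: excluded_middle_informative.
Qed.

Lemma theta_pos (G : sgraph) : 0 < theta G.
Proof. by case: (theta_ok G). Qed.

Lemma theta_dist (G : sgraph) (c : vert G -> nat) : theta G <= ncol c -> distinguishing c.
Proof. by move=> h; case: (theta_ok G) => _ /(_ _ h c); apply. Qed.

Lemma giso_sym (G H : sgraph) : giso G H -> giso H G.
Proof.
case=> f [[g fK gK] hf]; exists g; split; first by exists f.
by move=> x y; rewrite -hf !gK.
Qed.

Lemma threshold_iso (G H : sgraph) t : giso G H -> threshold_ok H t -> threshold_ok G t.
Proof.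
case=> f [[g fK gK] hf] [ht0 ht]; split => // K hK c hc s hs hsc.
have ginj : injective g by exact: can_inj gK.
have finj : injective f by exact: can_inj fK.
have hc' : uses_colors (c \o g) K.
  rewrite /uses_colors -hc; apply: ncol_eq => n; apply/codomP/codomP => -[x ->] /=.
    by exists (g x).
  by exists (f x); rewrite /= fK.
pose s' := perm (inj_comp finj (inj_comp (@perm_inj _ s) ginj)).
have := ht K hK _ hc' s'.
have haut : is_aut s' by move=> x y; rewrite !permE /= hf hs -hf !gK.
have hpres : forall v, (c \o g) (s' v) = (c \o g) v by move=> v; rewrite permE /= fK hsc.
move=> /(_ haut hpres) hs1; apply/permP => x; rewrite perm1.
have := congr1 (fun p : {perm vert H} => p (f x)) hs1; rewrite permE perm1 /= fK.
by move/finj.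
Qed.

Lemma theta_iso (G H : sgraph) : giso G H -> theta G = theta H.
Proof.
move=> h; apply/eqP; rewrite eqn_leq; apply/andP; split; apply: theta_min.
  exact: threshold_iso h (theta_ok H).
exact: threshold_iso (giso_sym h) (theta_ok G).
Qed.

Lemma pair_inj N a b a' b' : b < N -> b' < N -> a * N + b = a' * N + b' -> a = a' /\ b = b'.
Proof. move=> hb hb' e; have : a = a' by nia. by move=> ea; subst a'; split=> //; lia. Qed.

Section Main.
Variables (k : nat) (Gs : 'I_k -> sgraph).
Variable hc : forall i (x y : vert (Gs i)), exists n, y \in ball n x.
Variable hprime : forall i, cprime (Gs i).
Variable hniso : forall i j, i != j -> ~ giso (Gs i) (Gs j).
Notation P := (cartn Gs).
Notation PV := (vert P).

Definition rst i (x : PV) : vert (Qdel Gs i) :=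
  @finfun _ (fun j : {j : 'I_k | j != i} => vert (Gs (sval j))) (fun j => x (sval j)).

Lemma rst_inj i (x y : PV) : x i = y i -> rst i x = rst i y -> x = y.
Proof.
move=> h1 h2; apply/ffunP => l; case: (eqVneq l i) => [->//|hl].
by have := congr1 (fun f : vert (Qdel Gs i) => f (exist _ l hl)) h2; rewrite /rst /= !ffunE.
Qed.

Definition ext i (d : PV) (q : vert (Qdel Gs i)) : PV :=
  @finfun _ (fun j => vert (Gs j)) (fun j =>
    (if (j != i) as b return ((j != i) = b -> vert (Gs j))
     then fun h => q (exist _ j h) else fun _ => d j) erefl).

Lemma ext_val i d q (j : {j : 'I_k | j != i}) : ext d q (sval j) = q j.
Proof.
rewrite /ext ffunE; case: j => j hj /=.
move: (erefl (j != i)); rewrite {2 3}hj => h.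
by rewrite (bool_irrelevance h hj).
Qed.

Lemma upper (c : PV -> nat) (s : {perm PV}) : is_aut s -> (forall v, c (s v) = c v) ->
  s != 1%g -> exists i, ncol c <= (theta (Gs i) - 1) * #|vert (Qdel Gs i)|.
Proof.
move=> hs hsc hs1.
have [x0 hx0] : exists x0, s x0 != x0.
  apply/existsP; move: hs1; apply: contraR; rewrite negb_exists => /forallP h.
  by apply/eqP/permP => x; rewrite perm1; apply/eqP; move: (h x); rewrite negbK.
have [i hi] : exists i, s x0 i != x0 i.
  apply/existsP; move: hx0; apply: contraR; rewrite negb_exists => /forallP h.
  by apply/eqP/ffunP => j; apply/eqP; move: (h j); rewrite negbK.
exists i.
pose sf (g : vert (Gs i)) := s (upd x0 g) i.
have e1 : forall g, s (upd x0 g) = upd (s x0) (sf g).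
  move=> g; apply/ffunP => l; case: (eqVneq i l) => [<-|hl]; rewrite ?upd_in ?upd_out //.
  by rewrite (layer_same hc hprime hniso hs) // eq_sym.
have sinj : injective sf.
  by move=> g g' h; apply: (@upd_inj _ _ x0 i); apply: (@perm_inj _ s); rewrite !e1 h.
pose sg := perm sinj.
have hcoord : forall x, s x i = sf (x i).
  move=> x; apply: (coordwise hc hprime hniso hs (n := #|'I_k|)); first exact: max_card.
  by rewrite upd_in.
have hsga : is_aut sg.
  move=> g g'; rewrite !permE -(adj_upd (s x0)) -!e1.
  by have := hs (upd x0 g) (upd x0 g'); rewrite /= => ->; rewrite adj_upd.
have hsym : connect_sym (frel sf) := fconnect_sym sinj.
pose ci (g : vert (Gs i)) := nat_of_ord (enum_rank (froot sf g)).
have hci : forall g, ci (sg g) = ci g.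
  move=> g; rewrite permE /ci; congr (nat_of_ord (enum_rank _)).
  by apply/esym/(rootP hsym); apply: fconnect1.
have hF : ncol ci < theta (Gs i).
  rewrite ltnNge; apply/negP => /theta_dist hd.
  have := hd sg hsga hci => /(congr1 (fun p : {perm _} => p (x0 i))).
  by rewrite permE perm1 /sf upd_id => h; rewrite h eqxx in hi.
pose F := [set r : vert (Gs i) | roots (frel sf) r].
have cF : #|F| <= ncol ci.
  rewrite cardE -(size_map ci); apply: uniq_leq_size.
    rewrite map_inj_in_uniq ?enum_uniq // => r r'; rewrite !mem_enum !inE => /eqP hr /eqP hr'.
    by rewrite /ci => /val_inj /enum_rank_inj; rewrite hr hr'.
  by move=> n /mapP[r _ ->]; rewrite mem_undup codom_f.
pose Dset := [set x : PV | x i \in F].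
have hit : forall m x, iter m s x i = iter m sf (x i).
  by elim=> [//|m IH] x; rewrite !iterS hcoord IH.
have hitc : forall m x, c (iter m s x) = c x.
  by elim=> [//|m IH] x; rewrite iterS hsc IH.
have cD : ncol c <= #|Dset|.
  have hsub : {subset undup (codom c) <= undup (map c (enum Dset))}.
    move=> n; rewrite !mem_undup => /codomP[x ->].
    rewrite -(hitc (findex sf (x i) (froot sf (x i))) x); apply: map_f.
    rewrite mem_enum inE hit iter_findex ?connect_root // inE.
    exact: roots_root.
  rewrite /ncol; apply: leq_trans (uniq_leq_size (undup_uniq _) hsub) _.
  by rewrite cardE; apply: leq_trans (size_undup _) _; rewrite size_map.
have cDQ : #|Dset| <= #|F| * #|vert (Qdel Gs i)|.
  pose h (x : PV) := (x i, rst i x).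
  have hinj : injective h by move=> x y; rewrite /h => -[e2 e3]; exact: rst_inj e2 e3.
  rewrite -(card_in_imset (f := h) (D := Dset)); last by move=> x y _ _; apply: hinj.
  rewrite -cardsT -cardsX; apply: subset_leq_card; apply/subsetP => p /imsetP[x hx ->].
  by rewrite /h !inE /= andbT; move: hx; rewrite !inE.
apply: leq_trans cD _; apply: leq_trans cDQ _; apply: leq_mul => //.
by apply: leq_trans cF _; rewrite -ltnS; apply: leq_trans hF _; lia.
Qed.

Lemma lower i (x1 : PV) : 1 < theta (Gs i) -> exists (c : PV -> nat) (s : {perm PV}),
  [/\ is_aut s, (forall v, c (s v) = c v), s != 1%g &
       (theta (Gs i) - 1) * #|vert (Qdel Gs i)| <= ncol c].
Proof.
move=> hth.
have hnok : ~ threshold_ok (Gs i) (theta (Gs i) - 1) by move/theta_min; lia.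
have [K [ci [hK [hci hnd]]]] : exists K (ci : vert (Gs i) -> nat),
    theta (Gs i) - 1 <= K /\ uses_colors ci K /\ ~ distinguishing ci.
  apply: NNPP => hn; apply: hnok; split; first lia.
  move=> K hK ci hci; apply: NNPP => hd; apply: hn; exists K, ci; auto.
have [sg [hsa [hsp hs1]]] : exists sg : {perm vert (Gs i)},
    is_aut sg /\ (forall v, ci (sg v) = ci v) /\ sg <> 1%g.
  by apply: NNPP => hn; apply: hnd => sg ha hp; apply: NNPP => h1; apply: hn; exists sg.
pose N := #|vert (Qdel Gs i)|.
pose c (x : PV) := ci (x i) * N + enum_rank (rst i x).
pose pf (x : PV) := upd x (sg (x i)).
have hrst : forall x, rst i (pf x) = rst i x.
  move=> x; apply/ffunP => j; rewrite !ffunE /pf dfwith_out //.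
  by case: j => j hj /=; rewrite eq_sym.
have pinj : injective pf.
  move=> x y h.
  have hi : x i = y i by have := congr1 (fun f : PV => f i) h; rewrite /pf !upd_in => /perm_inj.
  by apply: (rst_inj hi); rewrite -(hrst x) h hrst.
pose p := perm pinj.
exists c, p; split.
- move=> x y; rewrite !permE /pf /=; apply/cartn_adjP/cartn_adjP => -[j [h1 h2]].
    case: (eqVneq i j) => [eij|hij].
      subst j; move: h1; rewrite !upd_in hsa => h1; exists i; split => // l hl.
      by have := h2 l hl; rewrite !upd_out // eq_sym.
    move: h1; rewrite !upd_out // => h1; exists j; split => // l hl.
    have := h2 l hl; case: (eqVneq i l) => [eil|hil]; last by rewrite !upd_out.
    by subst l; rewrite !upd_in => /perm_inj.
  case: (eqVneq i j) => [eij|hij].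
    subst j; exists i; rewrite !upd_in hsa; split => // l hl.
    by rewrite !upd_out 1?eq_sym //; apply: h2.
  exists j; rewrite !upd_out //; split => // l hl.
  case: (eqVneq i l) => [eil|hil]; last by rewrite !upd_out //; apply: h2.
  by subst l; rewrite !upd_in h2 // eq_sym.
- by move=> v; rewrite /c permE hrst /pf upd_in hsp.
- have [g hg] : exists g, sg g != g.
    apply/existsP; case: (boolP [exists g, sg g != g]) => // /existsPn h; exfalso.
    apply: hs1; apply/permP => g.
    by rewrite perm1; apply/eqP; move: (h g); rewrite negbK.
  apply: contra hg => /eqP hp1.
  have := congr1 (fun q : {perm PV} => q (upd x1 g) i) hp1.
  by rewrite permE perm1 /pf !upd_in => ->.
have hKc : ncol ci = K by [].
apply: leq_trans (leq_mul hK (leqnn N)) _; rewrite -hKc.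
pose L := [seq a * N + b | a <- undup (codom ci), b <- iota 0 N].
have -> : ncol ci * N = size L by rewrite size_allpairs size_iota.
rewrite /ncol; apply: uniq_leq_size.
  apply: allpairs_uniq; rewrite ?undup_uniq ?iota_uniq //.
  move=> [a b] [a' b'] /allpairsP[[a2 b2] [_ hb2 [-> ->]]] /allpairsP[[a3 b3] [_ hb3 [-> ->]]] /= e.
  move: hb2 hb3; rewrite /= !mem_iota !add0n => /andP[_ hb2] /andP[_ hb3].
  by case: (pair_inj hb2 hb3 e) => -> ->.
move=> z /allpairsP[[a b] [/= ha hb ->]] /=; rewrite mem_undup; move: ha hb.
rewrite mem_undup mem_iota add0n => /codomP[g ->] /andP[_ hb].
pose q : vert (Qdel Gs i) := enum_val (Ordinal hb).
apply/codomP; exists (upd (ext x1 q) g); rewrite /c upd_in.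
have -> : rst i (upd (ext x1 q) g) = q.
  apply/ffunP => j; rewrite ffunE upd_out; last by case: j => j hj /=; rewrite eq_sym.
  exact: ext_val.
by rewrite enum_valK.
Qed.

End Main.

Unset Implicit Arguments.
Theorem theorem4p1 (k : nat) (G : sgraph) (Gs : 'I_k -> sgraph) :
  2 <= k ->
  giso G (cartn Gs) ->
  (forall i, cprime (Gs i)) ->
  (forall i, connected (Gs i)) ->
  (forall i j, i != j -> ~ giso (Gs i) (Gs j)) ->
  theta G = \max_(i < k) ((theta (Gs i) - 1) * #|vert (Qdel Gs i)|) + 1.
Proof.
move=> hk hiso hpr hcon hni.
have hc : forall i (x y : vert (Gs i)), exists n, y \in ball n x.
  move=> i x y; have := (hcon i).2 x y => /connectP[p hp ->]; exists (size p); exact: ball_path.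
have : 0 < #|vert (cartn Gs)|.
  rewrite /= card_dep_ffun.
  have : all (fun n => 0 < n) [seq #|vert (Gs x)| | x : 'I_k].
    by apply/allP => n /mapP[j _ ->]; exact: (hcon j).1.
  by elim: [seq _ | _ : _] => //= a s IH /andP[ha hs]; rewrite muln_gt0 ha IH.
case/card_gt0P => x1 _.
rewrite (theta_iso hiso).
set F := fun i : 'I_k => (theta (Gs i) - 1) * #|vert (Qdel Gs i)|.
have -> : \max_(i < k) ((theta (Gs i) - 1) * #|vert (Qdel Gs i)|) = \max_(i < k) F i by [].
apply/eqP; rewrite eqn_leq; apply/andP; split.
  apply: theta_min; split; first by rewrite addn1.
  move=> K hK c hcK s hs hsc; apply/eqP; apply: contraT => hs1.
  have [i hi] := upper hc hpr hni hs hsc hs1.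
  have hi2 : K <= F i by rewrite -hcK.
  have hb := leq_bigmax (F := F) i.
  have := leq_trans hK hi2; rewrite addn1 ltnNge.
  by move/negP => h; exfalso; apply: h.
case: (posnP (\max_(i < k) F i)) => [->|hM]; first by rewrite add0n theta_pos.
have hk0 : 0 < #|'I_k| by rewrite card_ord; lia.
have [i0 hi0] := eq_bigmax F hk0.
have hth : 1 < theta (Gs i0) by move: hM; rewrite hi0 /F muln_gt0 => /andP[]; lia.
have [c [s [hs hsc hs1 hcol]]] := lower (i:=i0) x1 hth.
rewrite addn1 ltnNge; apply/negP => hle.
have hle2 : \max_(i < k) F i <= ncol c by rewrite hi0 /F; exact: hcol.
have hd := theta_dist (c := c) (leq_trans hle hle2).
by move: hs1; rewrite (hd s hs hsc) eqxx.
Qed.
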